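(* Let $n\ge 1$ and let $g(q)=q^{n}+q^{n-1}a_{n-1}+\dots+qa_1+a_0$ with $a_0,\dots,a_{n-1}\in\mathbb{H}$. Let $\alpha_1,\alpha_2,\dots,\alpha_{n-1}$ be arbitrary positive real numbers and set $\alpha_0=0$, $\alpha_n=1$. Then every zero $q\in\mathbb{H}$ of $g$ satisfies $$|q|\le \max\Big\{\frac{\alpha_i}{\alpha_{i+1}}+\frac{|a_i|}{\alpha_{i+1}}\ :\ i=0,1,\dots,n-1\Big\}.$$
   Context: $\mathbb{H}$ denotes the real quaternions $a_0+a_1i+a_2j+a_3k$ with $i^2=j^2=k^2=ijk=-1$; for $q=\alpha+\beta i+\gamma j+\delta k$, $|q|=\sqrt{\alpha^2+\beta^2+\gamma^2+\delta^2}$. The polynomial $g$ has its coefficients written to the right of the powers of the variable, and it is evaluated at $q\in\mathbb{H}$ by direct substitution, $g(q)=q^n+q^{n-1}a_{n-1}+\dots+qa_1+a_0$; a zero of $g$ is a $q\in\mathbb{H}$ with $g(q)=0$. *)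

(* Defs.v *)
From HB Require Import structures.
From mathcomp Require Import all_boot all_order all_algebra.
From mathcomp Require Import reals.
Set Implicit Arguments. Unset Strict Implicit. Unset Printing Implicit Defensive.
Import Order.TTheory GRing.Theory Num.Theory.
Local Open Scope ring_scope.

Section Quat.
Variable R : realType.

(* q = q0 + q1 i + q2 j + q3 k *)
Record quat := Quat { q0 : R; q1 : R; q2 : R; q3 : R }.

Definition qzero : quat := Quat 0 0 0 0.
Definition qone : quat := Quat 1 0 0 0.

Definition qadd (p q : quat) : quat :=
  Quat (q0 p + q0 q) (q1 p + q1 q) (q2 p + q2 q) (q3 p + q3 q).

(* Hamilton product, from i^2 = j^2 = k^2 = ijk = -1 *)
Definition qmul (p q : quat) : quat :=
  Quat (q0 p * q0 q - q1 p * q1 q - q2 p * q2 q - q3 p * q3 q)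
       (q0 p * q1 q + q1 p * q0 q + q2 p * q3 q - q3 p * q2 q)
       (q0 p * q2 q - q1 p * q3 q + q2 p * q0 q + q3 p * q1 q)
       (q0 p * q3 q + q1 p * q2 q - q2 p * q1 q + q3 p * q0 q).

Definition qnorm (q : quat) : R :=
  Num.sqrt (q0 q ^+ 2 + q1 q ^+ 2 + q2 q ^+ 2 + q3 q ^+ 2).

Fixpoint qpow (q : quat) (k : nat) : quat :=
  match k with
  | 0 => qone
  | k'.+1 => qmul (qpow q k') q
  end.

(* g(q) = q^n + q^{n-1} a_{n-1} + ... + q a_1 + a_0
   (coefficients on the right, evaluation by direct substitution) *)
Definition geval (n : nat) (a : nat -> quat) (q : quat) : quat :=
  qadd (qpow q n) (foldr qadd qzero [seq qmul (qpow q i) (a i) | i <- iota 0 n]).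

End Quat.

(* Main.v *)
Require Import Defs.
From HB Require Import structures.
From mathcomp Require Import all_boot all_order all_algebra.
From mathcomp Require Import reals.
From mathcomp Require Import ring lra.
Import Order.TTheory GRing.Theory Num.Theory.
Local Open Scope ring_scope.

Section Aux.
Variable R : realType.
Implicit Types p q : quat R.

Definition N2 (q : quat R) := q0 q ^+ 2 + q1 q ^+ 2 + q2 q ^+ 2 + q3 q ^+ 2.

Lemma N2_ge0 q : 0 <= N2 q.
Proof. rewrite /N2; set a := q0 q; set b := q1 q; set c := q2 q; set d := q3 q.
have := sqr_ge0 a; have := sqr_ge0 b; have := sqr_ge0 c; have := sqr_ge0 d. lra. Qed.

Lemma qnorm_ge0 q : 0 <= qnorm q.
Proof. exact: sqrtr_ge0. Qed.

Lemma qnormM p q : qnorm (qmul p q) = qnorm p * qnorm q.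
Proof.
rewrite /qnorm -sqrtrM; last exact: (N2_ge0 p).
congr Num.sqrt; rewrite /qmul /=; ring.
Qed.

Lemma qnormD p q : qnorm (qadd p q) <= qnorm p + qnorm q.
Proof.
have hs := qnorm_ge0 p; have ht := qnorm_ge0 q.
have -> : qnorm p + qnorm q = Num.sqrt ((qnorm p + qnorm q) ^+ 2).
  by rewrite sqrtr_sqr ger0_norm // addr_ge0.
rewrite /qnorm ler_sqrt; last exact: sqr_ge0.
set s := Num.sqrt (N2 p); set t := Num.sqrt (N2 q).
have es : s ^+ 2 = N2 p by rewrite sqr_sqrtr // N2_ge0.
have et : t ^+ 2 = N2 q by rewrite sqr_sqrtr // N2_ge0.
set dot := q0 p * q0 q + q1 p * q1 q + q2 p * q2 q + q3 p * q3 q.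
have hd : dot <= s * t.
  rewrite /s /t -sqrtrM ?N2_ge0 //.
  apply: (le_trans (ler_norm dot)); rewrite -sqrtr_sqr ler_sqrt; last first.
    by apply: mulr_ge0; apply: N2_ge0.
  rewrite -subr_ge0.
  have -> : N2 p * N2 q - dot ^+ 2 =
    (q0 p * q1 q - q1 p * q0 q) ^+ 2 + (q0 p * q2 q - q2 p * q0 q) ^+ 2 +
    (q0 p * q3 q - q3 p * q0 q) ^+ 2 + (q1 p * q2 q - q2 p * q1 q) ^+ 2 +
    (q1 p * q3 q - q3 p * q1 q) ^+ 2 + (q2 p * q3 q - q3 p * q2 q) ^+ 2.
    by rewrite /N2 /dot; ring.
  by rewrite !addr_ge0 // sqr_ge0.
have -> : (q0 (qadd p q) ^+ 2 + q1 (qadd p q) ^+ 2 + q2 (qadd p q) ^+ 2 +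
    q3 (qadd p q) ^+ 2) = N2 p + N2 q + 2 * dot by rewrite /N2 /dot /=; ring.
rewrite -es -et; lra.
Qed.

Lemma qnorm_pow q k : qnorm (qpow q k) = qnorm q ^+ k.
Proof.
elim: k => [|k IH] /=.
  by rewrite /qnorm /qone /= expr1n !expr0n /= !addr0 sqrtr1.
by rewrite qnormM IH exprSr.
Qed.

Lemma qnorm0 : qnorm (qzero R) = 0.
Proof. by rewrite /qnorm /qzero /= !expr0n /= !addr0 sqrtr0. Qed.

Lemma qnorm_fold (f : nat -> quat R) (s : seq nat) :
  qnorm (foldr (@qadd R) (qzero R) [seq f i | i <- s]) <= \sum_(i <- s) qnorm (f i).
Proof.
elim: s => [|x s IH] /=; first by rewrite big_nil qnorm0.
rewrite big_cons; apply: (le_trans (qnormD _ _)); exact: lerD.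
Qed.

Lemma qnorm_addeq0 p q : qadd p q = qzero R -> qnorm p = qnorm q.
Proof.
case: p q => a b c d [e f g h] [] /= Ha Hb Hc Hd.
rewrite /qnorm /=; congr Num.sqrt.
have -> : a = - e by rewrite -[a](addrK e) Ha sub0r.
have -> : b = - f by rewrite -[b](addrK f) Hb sub0r.
have -> : c = - g by rewrite -[c](addrK g) Hc sub0r.
have -> : d = - h by rewrite -[d](addrK h) Hd sub0r.
by rewrite !sqrrN.
Qed.
End Aux.
Arguments qnorm_ge0 {R}. Arguments qnormM {R}. Arguments qnorm_pow {R}. Arguments qnorm_fold {R}. Arguments qnorm_addeq0 {R}.

Theorem theorem1 (R : realType) (n : nat) (a : nat -> quat R) (alpha : nat -> R)
  (hn : (1 <= n)%N)
  (halpha_pos : forall i : nat, (1 <= i)%N -> (i <= n.-1)%N -> 0 < alpha i)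
  (halpha0 : alpha 0%N = 0) (halphan : alpha n = 1)
  (q : quat R) (hq : geval n a q = qzero R) :
  qnorm q <= \big[Num.max/0]_(i < n)
               (alpha i / alpha i.+1 + qnorm (a i) / alpha i.+1).
Proof.
set M := \big[Num.max/0]_(i < n) _.
set r := qnorm q.
have hr0 : 0 <= r := qnorm_ge0 q.
rewrite leNgt; apply/negP => hM.
have hap : forall i, (i < n)%N -> 0 < alpha i.+1.
  move=> i hi; case: (ltngtP i.+1 n) => h.
  - by apply: halpha_pos => //; rewrite -ltnS prednK.
  - by rewrite ltnS in h; move: (leq_ltn_trans h hi); rewrite ltnn.
  - by rewrite h halphan ltr01.
have hterm : forall i, (i < n)%N ->
    alpha i / alpha i.+1 + qnorm (a i) / alpha i.+1 < r.
  move=> i hi; apply: le_lt_trans hM.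
  exact: (le_bigmax 0 (fun i : 'I_n => alpha i / alpha i.+1 + qnorm (a i) / alpha i.+1) (Ordinal hi)).
have hrpos : 0 < r.
  have := hterm 0%N hn; rewrite halpha0 mul0r add0r; apply: le_lt_trans.
  by rewrite divr_ge0 ?qnorm_ge0 // ltW // hap.
have hlt : forall i, (i < n)%N ->
    r ^+ i * qnorm (a i) < alpha i.+1 * r ^+ i.+1 - alpha i * r ^+ i.
  move=> i hi; have hai := hap i hi.
  have h1 : alpha i + qnorm (a i) < alpha i.+1 * r.
    by have := hterm i hi; rewrite -mulrDl ltr_pdivrMr // mulrC.
  have hri : 0 < r ^+ i by rewrite exprn_gt0.
  rewrite exprS mulrA -mulrBl [_ * qnorm _]mulrC ltr_pM2r //; lra.
have hsum : \sum_(0 <= i < n) r ^+ i * qnorm (a i) <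
    \sum_(0 <= i < n) (alpha i.+1 * r ^+ i.+1 - alpha i * r ^+ i).
  rewrite big_nat_cond [X in _ < X]big_nat_cond.
  apply: ltr_sum; first by rewrite /index_iota subn0; move: hn; case: (n) => //.
  by move=> i /andP [/andP [_ hi] _]; apply: hlt.
rewrite (telescope_sumr (fun i => alpha i * r ^+ i)) // halphan halpha0 mul0r subr0 mul1r in hsum.
have hge : r ^+ n <= \sum_(0 <= i < n) r ^+ i * qnorm (a i).
  rewrite /geval in hq; have := qnorm_addeq0 _ _ hq; rewrite qnorm_pow => ->.
  apply: (le_trans (qnorm_fold _ _)).
  rewrite /index_iota subn0; apply: ler_sum => i _.
  by rewrite qnormM qnorm_pow.
by move: (le_lt_trans hge hsum); rewrite ltxx.
Qed.
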